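(* Let $n,k$ be integers with $2\le 2k\le n-4$ and let $\lambda\in\overline{\mathcal{U}}_{T_{n,n-2k}}$. Then the Young diagram $\mathrm{KN}(S_\lambda)$ has exactly $2n-3+2k$ cells; consequently the sum of the hook lengths of the cells on its main diagonal is $2n-3+2k$.
   Context: A partition of $N$ into distinct parts is a sequence $\lambda=(\lambda_1<\dots<\lambda_t)$ of positive integers with sum $N$ and $t\ge 2$, identified with its set of parts. Missing parts: $\mathcal{M}_\lambda=\{1,\dots,\lambda_t\}\setminus\lambda$. $\lambda$ is refinable if two distinct missing parts sum to a part of $\lambda$, unrefinable otherwise; $\mathcal{U}_N$ is the set of unrefinable partitions of $N$. An element of $\mathcal{U}_N$ is maximal if its largest part is the maximum of the largest parts of elements of $\mathcal{U}_N$; $\widetilde{\mathcal{U}}_N$ is the set of these and $\overline{\mathcal{U}}_N=\{\lambda\in\widetilde{\mathcal{U}}_N:\#\mathcal{M}_\lambda=\lfloor\lambda_t/2\rfloor\}$. $T_n=n(n+1)/2$, $T_{n,d}=T_n-d$. $S_\lambda=\mathbb{N}_0\setminus\lambda$. The Keith–Nath transformation sends a set $S\subseteq\mathbb{N}_0$ with $0\in S$ and finite complement to the Young diagram $\mathrm{KN}(S)$ whose boundary is the lattice path that, starting at the origin, takes for $j=0,1,\dots,\max(\mathbb{N}_0\setminus S)$ an east step if $j\in S$ and a north step otherwise. Hook length of a cell = (cells to its right in its row) + (cells below it in its column) + 1; the main diagonal consists of the cells in row $i$, column $i$. *)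

(* Defs.v *)
From mathcomp Require Import all_boot.
Set Implicit Arguments. Unset Strict Implicit. Unset Printing Implicit Defensive.

(* A partition into distinct parts is represented by the strictly increasing
   sequence of its parts lambda_1 < ... < lambda_t. *)
Definition distinct_partition (N : nat) (l : seq nat) : Prop :=
  [/\ sorted ltn l, all (fun x => 0 < x) l, sumn l = N & 2 <= size l].

Definition largest (l : seq nat) : nat := last 0 l.

Definition missing (l : seq nat) : seq nat :=
  [seq m <- iota 1 (largest l) | m \notin l].

Definition refinable (l : seq nat) : Prop :=
  exists a b, [/\ a \in missing l, b \in missing l, a != b & a + b \in l].

Definition unrefinable (N : nat) (l : seq nat) : Prop :=
  distinct_partition N l /\ ~ refinable l.

Definition maximal_unrefinable (N : nat) (l : seq nat) : Prop :=
  unrefinable N l /\ forall mu, unrefinable N mu -> largest mu <= largest l.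

Definition bar_U (N : nat) (l : seq nat) : Prop :=
  maximal_unrefinable N l /\ size (missing l) = (largest l)./2.

Definition T (n : nat) : nat := n * n.+1 %/ 2.
Definition Tnd (n d : nat) : nat := T n - d.

Definition S_of (l : seq nat) : pred nat := fun x => x \notin l.

(* For S with 0 \in S and finite complement whose
   maximum is m, the boundary path takes for j = 0..m an east step if j \in S
   and a north step otherwise.  The row of the diagram created at the north
   step j has as many cells as east steps preceding it.  Listing rows from the
   top (English convention: last north step first) gives the partition
   (weakly decreasing sequence of row lengths). *)
Definition KN (S : pred nat) (m : nat) : seq nat :=
  [seq count S (iota 0 j) | j <- rev (iota 0 m.+1) & ~~ S j].

Definition ncells (p : seq nat) : nat := sumn p.

Definition is_cell (p : seq nat) (r c : nat) : bool := c < nth 0 p r.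

Definition hook (p : seq nat) (r c : nat) : nat :=
  (nth 0 p r - c.+1) + count (fun r' => c < nth 0 p r') (iota r.+1 (size p - r.+1)) + 1.

Definition diag_hook_sum (p : seq nat) : nat :=
  \sum_(0 <= i < size p | is_cell p i i) hook p i i.

(* Main.v *)
Require Import Defs.
From mathcomp Require Import all_boot zify.

Lemma sum_ltc (s c : nat) : c <= s -> \sum_(0 <= i < s) (i < c : nat) = c.
Proof.
move=> cs; rewrite (big_cat_nat (leq0n c) cs) /=.
rewrite (eq_big_nat _ _ (F2 := fun _ => 1)); last by move=> i /andP[_ ->].
rewrite sum_nat_const_nat big1_seq ?muln1 ?subn0 ?addn0 //.
move=> i /andP[_]; rewrite mem_index_iota => /andP[ci _].
by rewrite ltnNge ci.
Qed.

Lemma count_as_sum (P : pred nat) m n :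
  count P (iota m (n - m)) = \sum_(m <= i < n) (P i : nat).
Proof.
rewrite -sum1_count big_mkcond /=.
by apply: eq_bigr => i _; case: (P i).
Qed.

Lemma diag_eq (p : seq nat) :
  (forall i j, i <= j -> j < size p -> nth 0 p j <= nth 0 p i) ->
  diag_hook_sum p = ncells p.
Proof.
move=> dec.
have -> : ncells p = \sum_(0 <= i < size p) nth 0 p i.
  by rewrite /ncells sumnE (big_nth 0).
rewrite /diag_hook_sum big_mkcond /=.
rewrite (eq_big_nat _ _ (F2 := fun i => (nth 0 p i - i) +
    \sum_(0 <= r < size p) (((i < r) && (i < nth 0 p r)) : nat))); last first.
  move=> i /andP[_ ilt].
  have ->: \sum_(0 <= r < size p) (((i < r) && (i < nth 0 p r)) : nat) =
           count (fun r' => i < nth 0 p r') (iota i.+1 (size p - i.+1)).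
    rewrite count_as_sum (big_cat_nat (leq0n i.+1) ilt) /=.
    rewrite big1_seq ?add0n; last first.
      move=> r /andP[_]; rewrite mem_index_iota => /andP[_ ri].
      by rewrite ltnNge -ltnS ri.
    apply: eq_big_nat => r /andP[ir _]; by rewrite ir.
  rewrite /is_cell /hook.
  case: ifP => hi; first by lia.
  rewrite count_as_sum big1_seq; first by lia.
  move=> r /andP[_]; rewrite mem_index_iota => /andP[ir rs].
  have := dec i r (ltnW ir) rs.
  move/negbT: hi; rewrite -leqNgt => h1 h2.
  suff -> : (i < nth 0 p r) = false by [].
  by apply/negbTE; rewrite -leqNgt; apply: leq_trans h2 h1.
rewrite big_split /= exchange_big_nat /= -big_split /=.
apply: eq_big_nat => r /andP[_ rs].
rewrite (eq_bigr (fun i => (i < minn r (nth 0 p r) : nat))); last first.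
  by move=> i _; rewrite leq_min.
rewrite sum_ltc; first by lia.
by apply: leq_trans (geq_minl _ _) (ltnW rs).
Qed.

Lemma sumn_mapD (T : Type) (f g : T -> nat) s :
  sumn [seq f j + g j | j <- s] = sumn (map f s) + sumn (map g s).
Proof. elim: s => //= x s ->; lia. Qed.

Lemma count_lt_gt x s : x \notin s ->
  count (fun y => y < x) s + count (fun y => x < y) s = size s.
Proof.
elim: s => //= y s IH; rewrite inE negb_or => /andP[xy xs].
rewrite -IH //; move: xy; rewrite neq_ltn; case/orP => h.
  by rewrite h ltnNge (ltnW h) /=; lia.
by rewrite h ltnNge (ltnW h) /=; lia.
Qed.

Lemma pairs_count s : uniq s ->
  2 * sumn [seq count (fun y => y < j) s | j <- s] = size s * (size s).-1.
Proof.
elim: s => //= x s IH /andP[xs us].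
rewrite ltnn add0n.
rewrite sumn_mapD sumn_count.
have : count (fun y => y < x) s + count (leq x.+1) s = size s by exact: count_lt_gt. have := IH us.
case: (size s) => [|t] /=. all: nia.
Qed.

Lemma count_mem_iota s j : uniq s ->
  count (mem s) (iota 0 j) = count (fun y => y < j) s.
Proof.
move=> us; rewrite -!size_filter; apply: perm_size.
apply: uniq_perm; rewrite ?filter_uniq ?iota_uniq //.
by move=> y; rewrite !mem_filter mem_iota /= andbC.
Qed.

Lemma count_S l j : uniq l ->
  count (S_of l) (iota 0 j) + count (fun y => y < j) l = j.
Proof.
move=> ul; rewrite -count_mem_iota //.
rewrite addnC -[X in _ = X](size_iota 0 j) -(count_predC (mem l)).
congr (_ + _).
Qed.

Lemma KN_eq l m : sorted ltn l -> (forall x, x \in l -> x <= m) ->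
  KN (S_of l) m = rev [seq count (S_of l) (iota 0 j) | j <- l].
Proof.
move=> sl lm; rewrite /KN.
rewrite (eq_filter (a2 := mem l)); last by move=> j; rewrite /S_of negbK.
rewrite filter_rev map_rev; congr (rev (map _ _)).
apply: (irr_sorted_eq ltn_trans ltnn) => //.
  apply: sorted_filter; [exact: ltn_trans| exact: iota_ltn_sorted].
move=> y; rewrite mem_filter mem_iota /= add0n.
case yl: (y \in l) => //=; by rewrite ltnS lm.
Qed.

Lemma count_mono P i j : i <= j -> count P (iota 0 i) <= count P (iota 0 j).
Proof.
move=> ij; rewrite -(subnKC ij) iotaD count_cat; apply: leq_addr.
Qed.

Lemma KN_dec l : sorted ltn l ->
  let p := rev [seq count (S_of l) (iota 0 j) | j <- l] in
  forall i j, i <= j -> j < size p -> nth 0 p j <= nth 0 p i.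
Proof.
move=> sl p i j ij js.
have sp : sorted geq p.
  rewrite /p rev_sorted sorted_map.
  apply: sub_sorted sl => x y /= xy; exact: count_mono (ltnW xy).
apply: (sorted_leq_nth _ _ 0 sp) => //.
- by move=> a b c /= h1 h2; apply: leq_trans h2 h1.
- by move=> a /=.
- by rewrite inE; apply: leq_ltn_trans ij js.
Qed.

Lemma ncells_KN l m : sorted ltn l -> (forall x, x \in l -> x <= m) ->
  2 * ncells (KN (S_of l) m) + size l * (size l).-1 = 2 * sumn l.
Proof.
move=> sl lm; rewrite KN_eq // /ncells sumn_rev.
have ul : uniq l := sorted_uniq ltn_trans ltnn sl.
rewrite -(@pairs_count l ul) -mulnDr -sumn_mapD.
congr (2 * _); rewrite -[in RHS](map_id l); congr sumn.
by apply: eq_map => j; rewrite count_S.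
Qed.

Lemma sorted_iota_cat a b s : sorted ltn s -> all (fun y => a + b <= y) s ->
  sorted ltn (iota a b ++ s).
Proof.
elim: b a => [|b IH] a ss al /=; first by [].
rewrite path_min_sorted.
  apply: IH => //; apply/allP => y /(allP al); rewrite addSnnS.
  done.
rewrite all_cat; apply/andP; split.
  by apply/allP => y; rewrite mem_iota => /andP[h _].
apply/allP => y /(allP al) /=; lia.
Qed.

Lemma sumn_iota a b : 2 * sumn (iota a b) = b * (2 * a + b - 1).
Proof.
elim: b a => [|b IH] a //=.
rewrite mulnDr IH; nia.
Qed.

Lemma all_iota (P : pred nat) a b :
  (forall y, a <= y < a + b -> P y) -> all P (iota a b).
Proof. by move=> h; apply/allP => y; rewrite mem_iota => /h. Qed.

Definition muA (n k : nat) : seq nat :=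
  iota 1 (n - 4 - k) ++ (iota (n - 2 - k) (k - 1) ++ [:: n - 2; n - 2 + k; 2 * n - 5]).

Definition muB (n : nat) : seq nat := iota 1 (n - 2) ++ [:: 2 * n - 5].

Lemma T2 n : 2 * T n = n * n.+1.
Proof.
rewrite /T; have: 2 %| n * n.+1.
  by rewrite dvdn2 oddM /= andbN.
move/dvdnP=> [q ->]; rewrite mulnK //; lia.
Qed.

Lemma muA_ok n k : 1 <= k -> 2 * k + 5 <= n ->
  unrefinable (Tnd n (n - 2 * k)) (muA n k) /\ largest (muA n k) = 2 * n - 5.
Proof.
move=> k1 kn.
have mem : forall x, (x \in muA n k) =
   [|| (1 <= x) && (x < n - 3 - k), (n - 2 - k <= x) && (x < n - 3), x == n - 2,
       x == n - 2 + k | x == 2 * n - 5].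
  move=> x; rewrite /muA !mem_cat !mem_iota !inE.
  have -> : 1 + (n - 4 - k) = n - 3 - k by lia.
  have -> : n - 2 - k + (k - 1) = n - 3 by lia.
  by rewrite !orbA.
have lst : largest (muA n k) = 2 * n - 5.
  by rewrite /largest /muA !last_cat.
split=> //; split.
  split.
  - rewrite /muA; apply: sorted_iota_cat.
      apply: sorted_iota_cat => /=; first (apply/and3P; split => //; lia).
      apply/and4P; split => //; lia.
    rewrite all_cat; apply/andP; split.
      by apply: all_iota => y; lia.
    apply/and4P; split => //; lia.
  - rewrite /muA all_cat; apply/andP; split.
      by apply: all_iota => y; lia.
    rewrite all_cat; apply/andP; split; first by apply: all_iota => y; lia.
    apply/and4P; split => //; lia.
  - rewrite /Tnd /muA !sumn_cat /=.
    have h3 := T2 n.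
    have [e en] : exists e, n = e + 2 * k + 5 by exists (n - (2 * k + 5)); lia.
    have [j kj] : exists j, k = j.+1 by exists k.-1; lia.
    have -> : n - 4 - k = e + j + 2 by lia.
    have -> : n - 2 - k = e + j + 4 by lia.
    have -> : k - 1 = j by lia.
    have h1 : 2 * sumn (iota 1 (e + j + 2)) = (e + j + 2) * (e + j + 3).
      by rewrite sumn_iota; congr (_ * _); lia.
    have h2 : 2 * sumn (iota (e + j + 4) j) = j * (2 * e + 3 * j + 7).
      by rewrite sumn_iota; congr (_ * _); lia.
    have -> : n - 2 = e + 2 * j + 5 by lia.
    have -> : 2 * n - 5 = 2 * e + 4 * j + 9 by lia.
    have -> : n - 2 * k = e + 5 by lia.
    rewrite en kj in h3.
    rewrite en kj.
    apply/eqP; rewrite -(eqn_pmul2l (isT : 0 < 2)) mulnBr; apply/eqP; rewrite h3.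
    rewrite !mulnDr h1 h2.
    have -> : (e + 2 * j.+1 + 5).+1 = e + 2 * j + 8 by lia.
    move: h3 => _; rewrite !mulnDl !mulnDr.
    lia.
  - by rewrite /muA !size_cat /=; lia.
case=> a [b [am bm ab abl]].
move: am bm; rewrite /missing lst !mem_filter !mem_iota !mem.
move: abl; rewrite mem.
lia.
Qed.

Lemma muB_ok n k : 1 <= k -> 2 * k + 4 = n ->
  unrefinable (Tnd n (n - 2 * k)) (muB n) /\ largest (muB n) = 2 * n - 5.
Proof.
move=> k1 kn.
have mem : forall x, (x \in muB n) =
   [|| (1 <= x) && (x < n - 1) | x == 2 * n - 5].
  move=> x; rewrite /muB !mem_cat !mem_iota !inE.
  by have -> : 1 + (n - 2) = n - 1 by lia.
have lst : largest (muB n) = 2 * n - 5.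
  by rewrite /largest /muB !last_cat.
split=> //; split.
  split.
  - rewrite /muB; apply: sorted_iota_cat => //=; lia.
  - rewrite /muB all_cat; apply/andP; split.
      by apply: all_iota => y; lia.
    rewrite /= andbT; lia.
  - rewrite /Tnd /muB !sumn_cat /=.
    have h3 := T2 n.
    have [j kj] : exists j, k = j.+1 by exists k.-1; lia.
    have -> : n - 2 = 2 * j + 4 by lia.
    have h1 : 2 * sumn (iota 1 (2 * j + 4)) = (2 * j + 4) * (2 * j + 5).
      by rewrite sumn_iota; congr (_ * _); lia.
    have -> : 2 * n - 5 = 4 * j + 7 by lia.
    have -> : n - 2 * k = 4 by lia.
    rewrite -kn kj.
    apply/eqP; rewrite -(eqn_pmul2l (isT : 0 < 2)) mulnBr; apply/eqP.
    rewrite -kn kj in h3; rewrite h3.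
    rewrite !mulnDr h1.
    have -> : (2 * j.+1 + 4).+1 = 2 * j + 7 by lia.
    move: h3 => _; rewrite !mulnDl !mulnDr.
    lia.
  - by rewrite /muB !size_cat /= size_iota; lia.
case=> a [b [am bm ab abl]].
move: am bm; rewrite /missing lst !mem_filter !mem_iota !mem.
move: abl; rewrite mem.
lia.
Qed.

Lemma sum_lb s c : sorted ltn s -> all (leq c) s ->
  size s * (2 * c + size s - 1) <= 2 * sumn s.
Proof.
elim: s c => [|x s IH] c //= ps /andP[cx cs].
have ss : sorted ltn s := path_sorted ps.
have xs : all (leq x.+1) s := order_path_min ltn_trans ps.
have := IH x.+1 ss xs.
case: (size s) => [|t] /=; nia.
Qed.

Lemma size_missing l m : uniq l -> (forall y, y \in l -> 1 <= y <= m) ->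
  size [seq y <- iota 1 m | y \notin l] = m - size l.
Proof.
move=> ul lm.
have h1 : count (mem l) (iota 1 m) = size l.
  rewrite -size_filter; apply: perm_size; apply: uniq_perm.
  - by rewrite filter_uniq ?iota_uniq.
  - done.
  move=> y; rewrite mem_filter mem_iota /=.
  case yl: (y \in l) => //=; have := lm y yl; lia.
have h := count_predC (mem l) (iota 1 m).
rewrite size_iota h1 in h.
rewrite size_filter.
have -> : count (fun y => y \notin l) (iota 1 m) = count (predC (mem l)) (iota 1 m) by apply: eq_count.
lia.
Qed.

Lemma idA n : 2 <= n -> n * n.+1 = (n - 2) * (n - 1) + 4 * n - 2.
Proof.
move=> h; have [q ->] : exists q, n = q.+2 by exists (n - 2); lia.
rewrite !subSS subn0 /= !mulSn !mulnS; lia. Qed.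
Lemma idB n : 3 <= n -> n * n.+1 = (n - 2) * (n - 3) + 6 * n - 6.
Proof.
move=> h; have [q ->] : exists q, n = q.+3 by exists (n - 3); lia.
rewrite !subSS !subn0 /= !mulSn !mulnS; lia. Qed.

Theorem proposition4p5 (n k : nat) (l : seq nat) :
  2 <= 2 * k -> 2 * k + 4 <= n ->
  bar_U (Tnd n (n - 2 * k)) l ->
  ncells (KN (S_of l) (largest l)) = 2 * n - 3 + 2 * k /\
  diag_hook_sum (KN (S_of l) (largest l)) = 2 * n - 3 + 2 * k.
Proof.
move=> k1 kn [[[dp nref] maxl] hm].
have k1' : 1 <= k by lia.
have lb : 2 * n - 5 <= largest l.
  move: kn; rewrite leq_eqVlt => /orP[/eqP kn | kn].
    have [u lu] := @muB_ok n k k1' kn; by rewrite -lu; apply: maxl.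
  have kn' : 2 * k + 5 <= n by lia.
  have [u lu] := @muA_ok n k k1' kn'; by rewrite -lu; apply: maxl.
case: dp => sl pos sum sz.
have ul : uniq l := sorted_uniq ltn_trans ltnn sl.
have [p [x lpx]] : exists p x, l = rcons p x.
  case/lastP: l sz {sl pos sum hm lb maxl nref ul} => [|p x] //.
  by exists p, x.
have lx : largest l = x by rewrite lpx /largest last_rcons.
have hr : sorted (fun a b => b < a) (rev l) by rewrite rev_sorted.
rewrite lpx rev_rcons /= in hr.
have px : all (fun y => y < x) (rev p) := order_path_min (fun a b c h1 h2 => ltn_trans h2 h1) hr.
rewrite all_rev in px.
have sp : sorted ltn p.
  by have := path_sorted hr; rewrite rev_sorted.
have pp : all (leq 1) p.
  by move: pos; rewrite lpx all_rcons => /andP[_].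
have inl : forall y, y \in l -> 1 <= y <= x.
  move=> y; rewrite lpx mem_rcons inE => /orP[/eqP -> | yp].
    by move: pos; rewrite lpx all_rcons => /andP[]; lia.
  by rewrite (allP pp y yp) ltnW // (allP px y yp).
have sm := @size_missing l x ul inl.
rewrite /missing lx sm in hm.
have sl2 := @sum_lb p 1 sp pp.
have hs : sumn p + x = T n - (n - 2 * k) by rewrite -sumn_rcons -lpx.
have h3 := T2 n.
have sizel : size l = (size p).+1 by rewrite lpx size_rcons.
rewrite -divn2 in hm.
have nc := @ncells_KN l x sl (fun y yl => proj2 (andP (inl y yl))).
rewrite lx in lb.
have hx2 := divn_eq x 2.
have hx3 := ltn_pmod x (isT : 0 < 2).
rewrite sizel in hm nc.
have t1 : n - 2 <= (size p).+1 by lia.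
have id1 : n * n.+1 = (n - 2) * (n - 1) + 4 * n - 2.
  apply: idA; lia.
have id2 : n * n.+1 = (n - 2) * (n - 3) + 6 * n - 6.
  apply: idB; lia.
have sl3 : size p * (size p).+1 <= 2 * sumn p.
  by move: sl2; rewrite (_ : 2 * 1 + size p - 1 = (size p).+1) //; lia.
have t2 : (size p).+1 <= n - 2.
  rewrite leqNgt; apply/negP => h.
  have hh : (n - 2) * (n - 1) <= size p * (size p).+1.
    apply: leq_mul; lia.
  lia.
have ht : size p = n - 3 by lia.
have nv : ncells (KN (S_of l) x) = 2 * n - 3 + 2 * k.
  rewrite sum /Tnd /= ht in nc.
  have e3 : (n - 3).+1 = n - 2 by lia.
  rewrite e3 in nc.
  rewrite mulnC in nc.
  lia.
rewrite lx; split => //.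
rewrite diag_eq ?nv //.
rewrite (@KN_eq l x sl) ?(fun y yl => proj2 (andP (inl y yl))) //.
  exact: (@KN_dec l sl).
by move=> y /inl /andP[].
Qed.
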